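(* Let $d\ge 2$, $\xi>0$, and let $\sigma:\xi\mathbb{Z}^d\to\mathbb{R}$ be a generalized mass configuration. Let $R>0$ be such that $\operatorname{supp}\sigma\subset \hat B_R:=B(0,R)\cap\xi\mathbb{Z}^d$, and let $x_1,x_2,x_3,\ldots$ be an infinitely covering sequence of $\hat B_R$. For each $k\ge1$ let $\sigma_k:=T_{x_k}T_{x_{k-1}}\cdots T_{x_1}\sigma$ be the configuration obtained from $\sigma$ after toppling the points $x_1,\ldots,x_k$ in this order, and let $u_k$ be the corresponding $k$th odometer function. Then there exist a generalized mass configuration $\nu$ on $\xi\mathbb{Z}^d$ and a function $u:\xi\mathbb{Z}^d\to\mathbb{R}_+$ such that $\sigma_k(x)\to\nu(x)$ and $u_k(x)\nearrow u(x)$ for every $x\in\xi\mathbb{Z}^d$ as $k\to\infty$. Moreover, writing $\nu=\nu_+-\nu_-$ with $\nu_+=\max(\nu,0)$, $\nu_-=-\min(\nu,0)$, we have $\operatorname{supp}\nu_+\subset\partial\hat B_R$ and $\operatorname{supp}\nu_-\subset\operatorname{supp}\sigma_-$, so that $\nu\ge0$ on $\partial\hat B_R$ and $\nu\le 0$ on $\hat B_R$.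
   Context: A generalized mass configuration on $\xi\mathbb{Z}^d$ is a bounded function $\sigma:\xi\mathbb{Z}^d\to\mathbb{R}$ with finite support; $\sigma_+=\max(\sigma,0)$, $\sigma_-=-\min(\sigma,0)$, and $\operatorname{supp}\sigma=\operatorname{supp}\sigma_+\cup\operatorname{supp}\sigma_-$. For $y,y'\in\xi\mathbb{Z}^d$, $y'\sim y$ means $y'$ is one of the $2d$ lattice neighbours of $y$ at distance $\xi$. The discrete Laplacian is $\Delta f(y)=\frac{1}{2d\xi^2}\sum_{y'\sim y}(f(y')-f(y))$. For $x\in\xi\mathbb{Z}^d$ and a configuration $\eta$, the toppling of $\eta$ at $x$ is $T_x\eta(y):=\eta(y)+\eta_+(x)\,\xi^2\,\Delta\delta_x(y)$, where $\delta_x$ is the discrete delta function at $x$; i.e. if $\eta(x)>0$ the mass $\eta(x)$ is removed from $x$ and $\eta(x)/(2d)$ is added to each neighbour of $x$, and otherwise nothing changes. An infinitely covering sequence of a set $S\subset\xi\mathbb{Z}^d$ is a sequence of points of $S$ in which every point of $S$ appears infinitely often. The $k$th odometer function is $u_k(x):=\xi^2\sum_{1\le j\le k,\ x_j=x}(\sigma_{j-1})_+(x)$ (with $\sigma_0=\sigma$), i.e. $\xi^2$ times the total mass emitted from $x$ during the first $k$ topplings. For $S\subset\xi\mathbb{Z}^d$, the outer boundary is $\partial S:=\{y\notin S:\exists\, y'\in S \text{ with } y\sim y'\}$. $B(a,r)$ denotes the open Euclidean ball in $\mathbb{R}^d$. *)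

(* Defs.v *)
From HB Require Import structures.
From mathcomp Require Import all_boot all_order all_algebra.
From mathcomp Require Import all_classical all_reals all_analysis.
Set Implicit Arguments. Unset Strict Implicit. Unset Printing Implicit Defensive.
Import Order.TTheory GRing.Theory Num.Theory.
Local Open Scope ring_scope.

(* A point of xi Z^d is represented by its integer coordinates z : 'I_d -> int;
   the actual point is xi * z. *)
Definition pt (d : nat) := {ffun 'I_d -> int}.

Definition shift d (y : pt d) (i : 'I_d) (s : int) : pt d :=
  [ffun j => y j + (if j == i then s else 0)].

Definition adj d (y' y : pt d) : Prop :=
  exists i : 'I_d, y' = shift y i 1 \/ y' = shift y i (-1).

Section Defs.
Variable R : realType.

Definition posp (a : R) : R := Num.max a 0.
Definition negp (a : R) : R := - Num.min a 0.

Definition gen_mass_config d (s : pt d -> R) : Prop :=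
  (exists M : R, forall y, `|s y| <= M) /\
  (exists S : seq (pt d), forall y, y \notin S -> s y = 0).

Definition ddelta d (x : pt d) : pt d -> R := fun y => if y == x then 1 else 0.

Definition dlap d (xi : R) (f : pt d -> R) (y : pt d) : R :=
  (2 * d%:R * xi ^+ 2)^-1 *
  \sum_(i < d) ((f (shift y i 1) - f y) + (f (shift y i (-1)) - f y)).

Definition topple d (xi : R) (x : pt d) (eta : pt d -> R) : pt d -> R :=
  fun y => eta y + posp (eta x) * xi ^+ 2 * dlap xi (ddelta x) y.

(* sigma_k = T_{x_k} ... T_{x_1} sigma  (sequence indexed from 1) *)
Fixpoint topseq d (xi : R) (x : nat -> pt d) (sigma : pt d -> R) (k : nat)
  : pt d -> R :=
  match k with
  | 0 => sigma
  | k'.+1 => topple xi (x k'.+1) (topseq xi x sigma k')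
  end.

Definition odometer d (xi : R) (x : nat -> pt d) (sigma : pt d -> R) (k : nat)
  (y : pt d) : R :=
  xi ^+ 2 * \sum_(1 <= j < k.+1 | x j == y) posp (topseq xi x sigma j.-1 y).

Definition in_ball d (xi rad : R) (y : pt d) : Prop :=
  Num.sqrt (\sum_(i < d) (xi * (y i)%:~R) ^+ 2) < rad.

Definition outer_boundary d (S : pt d -> Prop) (y : pt d) : Prop :=
  ~ S y /\ exists y', S y' /\ adj y y'.

(* infinitely covering sequence (indexed from 1) of S *)
Definition inf_covering d (S : pt d -> Prop) (x : nat -> pt d) : Prop :=
  (forall k, (1 <= k)%N -> S (x k)) /\
  (forall y, S y -> forall N : nat, exists k, (N <= k)%N /\ (1 <= k)%N /\ x k = y).

End Defs.

(* Main.v *)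
From Pilot Require Import Defs.
From HB Require Import structures.
From mathcomp Require Import all_boot all_order all_algebra.
From mathcomp Require Import all_classical all_reals all_analysis.
From mathcomp Require Import zify ring lra.
Import Order.TTheory GRing.Theory Num.Theory.
Import numFieldNormedType.Exports.
Local Open Scope classical_set_scope.
Local Open Scope ring_scope.

Local Notation shift := Pilot.Defs.shift.
Section Aux.
Variable R : realType.
Variable d : nat.
Implicit Types (y z x : pt d).

Lemma shiftK y (i : 'I_d) (s : int) : shift (shift y i s) i (-s) = y.
Proof.
apply/ffunP => j; rewrite !ffunE; case: eqP => _; last by rewrite !addr0.
by rewrite -addrA subrr addr0.
Qed.

Lemma shift_eq y x (i : 'I_d) (s : int) : (shift y i s == x) = (y == shift x i (-s)).
Proof.
apply/eqP/eqP => [<-|->]; first by rewrite shiftK.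
by rewrite -{2}(opprK s) shiftK.
Qed.

Lemma shift_neq y (i : 'I_d) (s : int) : s != 0 -> shift y i s != y.
Proof.
move=> s0; apply/eqP => /ffunP /(_ i); rewrite ffunE eqxx => h.
have : s = 0 by apply: (addrI (y i)); rewrite addr0.
by move/eqP; rewrite (negbTE s0).
Qed.

Lemma posp_ge0 (a : R) : 0 <= posp a.
Proof. by rewrite /posp le_max lexx orbT. Qed.

Lemma posp_ge (a : R) : a <= posp a.
Proof. by rewrite /posp le_max lexx. Qed.

Lemma posp_id (a : R) : 0 <= a -> posp a = a.
Proof. by move=> h; rewrite /posp max_l. Qed.

Lemma posp_le (a b : R) : a <= b -> 0 <= b -> posp a <= b.
Proof. by move=> h1 h2; rewrite /posp ge_max h1 h2. Qed.

Lemma posp_gt0 (a : R) : posp a != 0 -> 0 < a.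
Proof.
by rewrite /posp; case: (lerP a 0) => h //; rewrite eqxx.
Qed.

Lemma negp_lt0 (a : R) : negp a != 0 -> a < 0.
Proof.
by rewrite /negp; case: (lerP 0 a) => h //; rewrite oppr0 eqxx.
Qed.

Lemma negp_neq0 (a : R) : a < 0 -> negp a != 0.
Proof. by move=> h; rewrite /negp min_l ?ltW // oppr_eq0 lt_eqF. Qed.

Lemma posp0 (a : R) : a <= 0 -> posp a = 0.
Proof. by move=> h; rewrite /posp max_r. Qed.

Lemma posp_sub (a : R) : posp (a - posp a) = 0.
Proof.
case: (lerP 0 a) => h; first by rewrite (posp_id _ h) subrr posp0.
by rewrite (posp0 _ (ltW h)) subr0 posp0 // ltW.
Qed.

Lemma sub_posp_le0 (a : R) : a - posp a <= 0.
Proof. by rewrite subr_le0 posp_ge. Qed.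

Lemma dlap_self (xi : R) x : xi != 0 -> d != 0%N ->
  dlap xi (ddelta R x) x = - (xi ^+ 2)^-1.
Proof.
move=> xi0 d0; rewrite /dlap.
have -> : \sum_(i < d) ((ddelta R x (shift x i 1) - ddelta R x x) +
   (ddelta R x (shift x i (-1)) - ddelta R x x)) = \sum_(i < d) (-2 : R).
  apply: eq_bigr => i _; rewrite /ddelta eqxx.
  rewrite (negbTE (@shift_neq _ _ (1:int) (oner_neq0 _))).
  rewrite (negbTE (@shift_neq _ _ (-1:int) (_ : (-1 : int) != 0))) //.
  by rewrite sub0r -opprD.
rewrite sumr_const card_ord.
have dn : (d%:R : R) != 0 by rewrite pnatr_eq0.
rewrite -mulNrn -mulr_natr; field.
by rewrite dn xi0.
Qed.

Lemma dlap_ge0 (xi : R) x y : y != x -> 0 <= dlap xi (ddelta R x) y.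
Proof.
move=> ne; rewrite /dlap; apply: mulr_ge0.
  by rewrite invr_ge0 mulr_ge0 ?sqr_ge0 // mulr_ge0.
apply: sumr_ge0 => i _; rewrite /ddelta (negbTE ne) !subr0.
by apply: addr_ge0; case: ifP.
Qed.

Lemma dlap_zero (xi : R) x y : y != x ->
  (forall i, shift y i 1 != x) -> (forall i, shift y i (-1) != x) ->
  dlap xi (ddelta R x) y = 0.
Proof.
move=> ne h1 h2; rewrite /dlap big1 ?mulr0 // => i _.
by rewrite /ddelta (negbTE ne) (negbTE (h1 i)) (negbTE (h2 i)) !subrr addr0.
Qed.

Lemma dlap_lin (xi : R) f g (c : R) y :
  dlap xi (fun z => f z + c * g z) y = dlap xi f y + c * dlap xi g y.
Proof.
rewrite /dlap [c * (_ * _)]mulrCA -mulrDr; congr (_ * _).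
rewrite mulr_sumr -big_split; apply: eq_bigr => i _ /=; ring.
Qed.

Lemma dlap0 (xi : R) y : dlap xi (fun _ => 0) y = 0.
Proof. by rewrite /dlap big1 ?mulr0 // => i _; rewrite !subrr addr0. Qed.

Lemma sum_delta (S : seq (pt d)) a (g : pt d -> R) : uniq S -> a \in S ->
  \sum_(y <- S) g y * (if y == a then 1 else 0) = g a.
Proof.
move=> uS aS; rewrite (bigD1_seq a) //= eqxx mulr1 big1 ?addr0 //.
by move=> y /negbTE ->; rewrite mulr0.
Qed.

Lemma sum_lap (S : seq (pt d)) x (g : pt d -> R) (xi : R) :
  xi != 0 -> d != 0%N -> uniq S -> x \in S ->
  (forall i, shift x i 1 \in S) -> (forall i, shift x i (-1) \in S) ->
  \sum_(y <- S) g y * (xi ^+ 2 * dlap xi (ddelta R x) y) =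
  (2 * d%:R)^-1 * \sum_(i < d) (g (shift x i (-1)) + g (shift x i 1) - 2 * g x).
Proof.
move=> xi0 d0 uS xS h1 h2.
have dn : (d%:R : R) != 0 by rewrite pnatr_eq0.
have key : forall t : R, xi ^+ 2 * ((2 * d%:R * xi ^+ 2)^-1 * t) = (2 * d%:R)^-1 * t.
  by move=> t; field; rewrite dn xi0.
have -> : \sum_(y <- S) g y * (xi ^+ 2 * dlap xi (ddelta R x) y) =
  (2 * d%:R)^-1 * \sum_(y <- S) \sum_(i < d)
   (g y * (if y == shift x i (-1) then 1 else 0) +
    g y * (if y == shift x i 1 then 1 else 0) -
    2 * (g y * (if y == x then 1 else 0))).
  rewrite mulr_sumr; apply: eq_bigr => y _.
  rewrite /dlap /ddelta.
  rewrite key.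
  rewrite mulrCA; congr (_ * _); rewrite mulr_sumr; apply: eq_bigr => i _.
  rewrite !shift_eq opprK.
  move: (if y == shift x i (-1) then _ else _) (if y == shift x i 1 then _ else _)
    (if y == x then _ else _) => a b c; ring.
congr (_ * _); rewrite exchange_big /=; apply: eq_bigr => i _.
rewrite sumrB big_split /= -mulr_sumr !sum_delta //.
Qed.

Definition fq (y : pt d) : R := \sum_(j < d) ((y j)%:~R : R) ^+ 2.

Lemma fq_ge0 y : 0 <= fq y.
Proof. by apply: sumr_ge0 => j _; rewrite sqr_ge0. Qed.

Lemma fq_lap x (i : 'I_d) : fq (shift x i (-1)) + fq (shift x i 1) - 2 * fq x = 2.
Proof.
rewrite /fq mulr_sumr -big_split -sumrB /=.
rewrite (eq_bigr (fun j => if j == i then 2 else 0)) => [|j _].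
  by rewrite -big_mkcond big_pred1_eq.
rewrite !ffunE; case: (j == i) => /=; rewrite ?addr0 ?intrD ?intrN /=; ring.
Qed.

Lemma sum_lap1 (S : seq (pt d)) x (xi : R) :
  xi != 0 -> d != 0%N -> uniq S -> x \in S ->
  (forall i, shift x i 1 \in S) -> (forall i, shift x i (-1) \in S) ->
  \sum_(y <- S) 1 * (xi ^+ 2 * dlap xi (ddelta R x) y) = 0.
Proof.
move=> *; rewrite (@sum_lap S x (fun _ => 1)) // big1 ?mulr0 // => i _; ring.
Qed.

Lemma sum_lapf (S : seq (pt d)) x (xi : R) :
  xi != 0 -> d != 0%N -> uniq S -> x \in S ->
  (forall i, shift x i 1 \in S) -> (forall i, shift x i (-1) \in S) ->
  \sum_(y <- S) fq y * (xi ^+ 2 * dlap xi (ddelta R x) y) = 1.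
Proof.
move=> xi0 d0 *; rewrite (@sum_lap S x fq) //.
under eq_bigr do rewrite fq_lap.
have dn : (d%:R : R) != 0 by rewrite pnatr_eq0.
rewrite sumr_const card_ord -mulr_natr; field; by rewrite dn.
Qed.

Lemma topple_sum (S : seq (pt d)) x (g eta : pt d -> R) (xi : R) :
  \sum_(y <- S) g y * topple xi x eta y =
  \sum_(y <- S) g y * eta y +
  posp (eta x) * \sum_(y <- S) g y * (xi ^+ 2 * dlap xi (ddelta R x) y).
Proof. by rewrite /topple mulr_sumr -big_split; apply: eq_bigr => y _ /=; ring. Qed.

Lemma topple_self (xi : R) x eta : xi != 0 -> d != 0%N ->
  topple xi x eta x = eta x - posp (eta x).
Proof. by move=> xi0 d0; rewrite /topple dlap_self //; field. Qed.

Lemma topple_ge (xi : R) x (eta : pt d -> R) y : y != x -> eta y <= topple xi x eta y.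
Proof.
move=> ne; rewrite /topple lerDl mulr_ge0 ?dlap_ge0 //.
by rewrite mulr_ge0 ?posp_ge0 ?sqr_ge0.
Qed.

Lemma topple_far (xi : R) x (eta : pt d -> R) y : y != x ->
  (forall i, shift y i 1 != x) -> (forall i, shift y i (-1) != x) ->
  topple xi x eta y = eta y.
Proof. by move=> *; rewrite /topple dlap_zero // mulr0 addr0. Qed.

Lemma posp_topple (xi : R) x (eta : pt d -> R) y : xi != 0 -> d != 0%N ->
  posp (topple xi x eta y) <= posp (eta y) + (topple xi x eta y - eta y).
Proof.
move=> xi0 d0; case: (eqVneq y x) => [->|ne].
  rewrite topple_self // posp_sub; have := posp_ge0 (eta x); lra.
have := @topple_ge xi x eta y ne; have := posp_ge (eta y); have := posp_ge0 (eta y).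
move=> h1 h2 h3; apply: posp_le; lra.
Qed.

Lemma cvg_sum_seq (I : Type) (r : seq I) (F : I -> nat -> R) (l : I -> R) :
  (forall i, F i k @[k --> \oo] --> l i) ->
  (\sum_(i <- r) F i k) @[k --> \oo] --> \sum_(i <- r) l i.
Proof.
move=> h; elim: r => [|a r IH].
  have -> : (fun k => \sum_(i <- [::]) F i k) = (fun _ => 0).
    by apply: funext => k; rewrite big_nil.
  rewrite big_nil; exact: cvg_cst.
have -> : (fun k => \sum_(i <- a :: r) F i k) = (fun k => F a k + \sum_(i <- r) F i k).
  by apply: funext => k; rewrite big_cons.
rewrite big_cons; exact: cvgD.
Qed.

Definition inbox (M : nat) (y : pt d) := forall j, (absz (y j) <= M)%N.

Definition boxl (M : nat) : seq (pt d) :=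
  map (fun g : {ffun 'I_d -> 'I_(M + M).+1} =>
    [ffun j => ((nat_of_ord (g j))%:Z - M%:Z)%R] : pt d)
  (enum {ffun 'I_d -> 'I_(M + M).+1}).

Lemma boxlP M y : inbox M y -> y \in boxl M.
Proof.
move=> h; apply/mapP; exists [ffun j => inord (absz (y j + M%:Z)%R)].
  by rewrite mem_enum.
apply/ffunP => j; rewrite !ffunE inordK; have := h j; move: (y j) => z; lia.
Qed.

Lemma inbox_shift M y (i : 'I_d) (s : int) : inbox M y -> (s = 1 \/ s = -1) ->
  inbox M.+1 (shift y i s).
Proof.
move=> h hs j; rewrite ffunE; have := h j; case: hs => ->; case: (j == i) => /=; lia.
Qed.

Lemma ball_box (xi rad : R) : 0 < xi -> 0 < rad ->
  exists N : nat, forall y, in_ball xi rad y -> inbox N y.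
Proof.
move=> xi0 rad0; exists (Num.Def.archi_bound (rad / xi)) => y hy j.
have hj : (xi * (y j)%:~R) ^+ 2 <= \sum_(i < d) (xi * (y i)%:~R) ^+ 2.
  rewrite (bigD1 j) //= lerDl; apply: sumr_ge0 => i _; exact: sqr_ge0.
have h1 : `|xi * (y j)%:~R| < rad.
  rewrite -sqrtr_sqr; apply: le_lt_trans hy; exact: ler_wsqrtr.
have h2 : (absz (y j))%:R < rad / xi.
  rewrite natr_absz intr_norm ltr_pdivlMr // mulrC -[X in X * _]gtr0_norm //.
  by rewrite -normrM.
have h3 := archi_boundP (ltW (divr_gt0 rad0 xi0)).
apply: ltnW; rewrite -(ltr_nat R); exact: lt_trans h2 h3.
Qed.

Lemma le_sum_mem (S : seq (pt d)) (h : pt d -> R) y :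
  (forall z, 0 <= h z) -> y \in S -> h y <= \sum_(z <- S) h z.
Proof.
move=> h0; elim: S => [//|a S IH]; rewrite in_cons big_cons => /orP [/eqP ->|yS].
  by rewrite lerDl sumr_ge0.
by apply: le_trans (IH yS) _; rewrite lerDr.
Qed.

Lemma sum_bound (S : seq (pt d)) (h g : pt d -> R) : (forall y, 0 <= h y) ->
  \sum_(y <- S) h y * g y <= (\sum_(y <- S) h y) * \sum_(y <- S) posp (g y).
Proof.
move=> h0; rewrite mulr_sumr big_seq [X in _ <= X]big_seq.
apply: ler_sum => y yS; apply: (@le_trans _ _ (h y * posp (g y))).
  by rewrite ler_wpM2l // posp_ge.
by rewrite ler_wpM2r ?posp_ge0 // le_sum_mem.
Qed.

Lemma topple_mass (S : seq (pt d)) x (eta : pt d -> R) (xi : R) :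
  xi != 0 -> d != 0%N -> uniq S -> x \in S ->
  (forall i, shift x i 1 \in S) -> (forall i, shift x i (-1) \in S) ->
  \sum_(y <- S) (topple xi x eta y - eta y) = 0.
Proof.
move=> *.
rewrite (eq_bigr (fun y => posp (eta x) * (1 * (xi ^+ 2 * dlap xi (ddelta R x) y)))).
  by rewrite -mulr_sumr sum_lap1 // mulr0.
by move=> y _; rewrite /topple; ring.
Qed.

End Aux.

Arguments inbox {d}. Arguments boxl {d}. Arguments boxlP {d M y}. Arguments fq {R d}.
Arguments inbox_shift {d M y i s}. Arguments topple_sum {R d}. Arguments posp_topple {R d}.
Arguments topple_mass {R d}. Arguments sum_bound {R d}. Arguments ball_box {R d}.
Arguments fq_ge0 {R d}. Arguments sum_lapf {R d}. Arguments topple_self {R d}.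
Arguments topple_ge {R d}. Arguments topple_far {R d}. Arguments le_sum_mem {R d}.
Arguments shift_eq {d}. Arguments posp_ge0 {R}. Arguments posp_ge {R}. Arguments posp_id {R}.
Arguments dlap_lin {R d}. Arguments dlap0 {R d}. Arguments cvg_sum_seq {R}.
Arguments posp_gt0 {R}. Arguments negp_lt0 {R}. Arguments negp_neq0 {R}.
Arguments sub_posp_le0 {R}. Arguments posp0 {R}. Arguments shiftK {d}.

Theorem proposition3p1 (R : realType) (d : nat) (xi rad : R)
  (sigma : pt d -> R) (x : nat -> pt d) :
  (2 <= d)%N -> 0 < xi -> 0 < rad ->
  gen_mass_config sigma ->
  (forall y, sigma y != 0 -> in_ball xi rad y) ->
  inf_covering (in_ball xi rad) x ->
  exists (nu : pt d -> R) (u : pt d -> R),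
    gen_mass_config nu /\
    (forall y, 0 <= u y) /\
    (forall y, (fun k => topseq xi x sigma k y) @ \oo --> nu y) /\
    (forall y,
       (forall m n : nat, (m <= n)%N ->
          odometer xi x sigma m y <= odometer xi x sigma n y) /\
       (fun k => odometer xi x sigma k y) @ \oo --> u y) /\
    (forall y, posp (nu y) != 0 -> outer_boundary (in_ball xi rad) y) /\
    (forall y, negp (nu y) != 0 -> negp (sigma y) != 0) /\
    (forall y, outer_boundary (in_ball xi rad) y -> 0 <= nu y) /\
    (forall y, in_ball xi rad y -> nu y <= 0).
Proof.
move=> d2 xi0 rad0 _ hsig [hcov1 hcov2].
have xin0 : xi != 0 by rewrite gt_eqF.
have dn0 : d != 0%N by rewrite -lt0n (leq_trans _ d2).
have [N hN] := ball_box (d:=d) xi rad xi0 rad0.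
set S := undup (boxl (d:=d) N.+1).
have uS : uniq S := undup_uniq _.
have inS : forall y, inbox N.+1 y -> y \in S by move=> y h; rewrite mem_undup boxlP.
have hx : forall k, (1 <= k)%N -> [/\ x k \in S,
   forall i, Pilot.Defs.shift (x k) i 1 \in S &
   forall i, Pilot.Defs.shift (x k) i (-1) \in S].
  move=> k k1; have hb := hN _ (hcov1 k k1); split.
  - by apply: inS => j; apply: leqW (hb j).
  - by move=> i; apply: inS; apply: inbox_shift => //; left.
  - by move=> i; apply: inS; apply: inbox_shift => //; right.
have topseqS : forall k, topseq xi x sigma k.+1 = topple xi (x k.+1) (topseq xi x sigma k)
  by [].
have hPhi : forall k, \sum_(y <- S) fq y * topseq xi x sigma k y =
   \sum_(y <- S) fq y * sigma y + \sum_(1 <= j < k.+1) posp (topseq xi x sigma j.-1 (x j)).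
  elim => [|k IH]; first by rewrite big_geq // addr0.
  have [h1 h2 h3] := hx k.+1 isT.
  rewrite topseqS topple_sum (@sum_lapf R d S (x k.+1) xi xin0 dn0 uS h1 h2 h3) mulr1 IH.
  by rewrite [in RHS]big_nat_recr //= addrA.
have hP : forall k, \sum_(y <- S) posp (topseq xi x sigma k y) <= \sum_(y <- S) posp (sigma y).
  elim => [//|k IH]; apply: le_trans IH.
  have [h1 h2 h3] := hx k.+1 isT.
  rewrite topseqS.
  apply: (@le_trans _ _ (\sum_(y <- S) (posp (topseq xi x sigma k y) +
     (topple xi (x k.+1) (topseq xi x sigma k) y - topseq xi x sigma k y)))).
    by apply: ler_sum => y _; apply: posp_topple.
  by rewrite big_split /= topple_mass // addr0.
set C := \sum_(y <- S) (fq y : R).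
have C0 : 0 <= C by apply: sumr_ge0 => y _; exact: fq_ge0.
set K := C * \sum_(y <- S) posp (sigma y) - \sum_(y <- S) fq y * sigma y.
have hsum : forall k, \sum_(1 <= j < k.+1) posp (topseq xi x sigma j.-1 (x j)) <= K.
  move=> k; have e := hPhi k.
  have b1 := sum_bound S fq (topseq xi x sigma k) fq_ge0.
  have b2 : C * \sum_(y <- S) posp (topseq xi x sigma k y) <= C * \sum_(y <- S) posp (sigma y).
    by rewrite ler_wpM2l.
  rewrite /K; rewrite -/C in b1; lra.
have hodS : forall k y, odometer xi x sigma k.+1 y = odometer xi x sigma k y +
    xi ^+ 2 * posp (topseq xi x sigma k (x k.+1)) * ddelta R (x k.+1) y.
  move=> k y; rewrite /odometer big_mkcond [X in _ = _ * X + _]big_mkcond.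
  rewrite big_nat_recr //= /ddelta eq_sym.
  by case: (eqVneq (x k.+1) y) => [->|ne]; rewrite ?eqxx /=; ring.
have hod_ge0 : forall k y, 0 <= odometer xi x sigma k y.
  move=> k y; rewrite /odometer mulr_ge0 ?sqr_ge0 //.
  apply: sumr_ge0 => j _; exact: posp_ge0.
have hodmono : forall y,
  {homo (fun k => odometer xi x sigma k y) : m n / (m <= n)%N >-> m <= n}.
  move=> y; apply/nondecreasing_seqP => k; rewrite hodS lerDl.
  have hd : 0 <= ddelta R (x k.+1) y by rewrite /ddelta; case: (_ == _).
  by rewrite mulr_ge0 // mulr_ge0 ?posp_ge0 // sqr_ge0.
have hodb : forall k y, odometer xi x sigma k y <= xi ^+ 2 * K.
  move=> k y; rewrite /odometer ler_wpM2l ?sqr_ge0 //; apply: le_trans (hsum k).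
  rewrite big_mkcond; apply: ler_sum => j _.
  by case: eqP => [<-|_]; [exact: lexx | exact: posp_ge0].
pose u := fun y => sup (range (fun k => odometer xi x sigma k y)).
have hcvgu : forall y, (fun k => odometer xi x sigma k y) @ \oo --> u y.
  move=> y; apply: nondecreasing_cvgn; first exact: hodmono.
  by exists (xi ^+ 2 * K) => _ [k _ <-]; exact: hodb.
have hrep : forall k y, topseq xi x sigma k y =
    sigma y + dlap xi (fun z => odometer xi x sigma k z) y.
  elim => [|k IH] y.
    have -> : (fun z => odometer xi x sigma 0 z) = (fun _ => 0).
      by apply: funext => z; rewrite /odometer big_geq // mulr0.
    by rewrite dlap0 addr0.
  rewrite topseqS /topple (IH y).
  have -> : (fun z => odometer xi x sigma k.+1 z) = (fun z => odometer xi x sigma k z +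
      (xi ^+ 2 * posp (topseq xi x sigma k (x k.+1))) * ddelta R (x k.+1) z).
    by apply: funext => z; rewrite hodS.
  rewrite dlap_lin; ring.
pose nu := fun y => sigma y + dlap xi u y.
have hcvg : forall y, (fun k => topseq xi x sigma k y) @ \oo --> nu y.
  move=> y; have -> : (fun k => topseq xi x sigma k y) =
     (fun k => sigma y + dlap xi (fun z => odometer xi x sigma k z) y).
    by apply: funext => k; rewrite hrep.
  apply: cvgD; first exact: cvg_cst.
  rewrite /dlap; apply: cvgMl_tmp; apply: cvg_sum_seq => i.
  by apply: cvgD; apply: cvgB; apply: hcvgu.
have lim_ge : forall (f : nat -> R) l a, f @ \oo --> l -> (forall k, a <= f k) -> a <= l.
  move=> f l a hf ha.
  have := @closed_cvg nat R \oo eventually_filter f [set z : R | a <= z]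
     (@closed_ge _ a) (@nearW _ \oo _ _ ha) _ hf.
  by apply; apply: eventually_filter.
have lim_le : forall (f : nat -> R) l a, f @ \oo --> l -> (forall k, f k <= a) -> l <= a.
  move=> f l a hf ha.
  have := @closed_cvg nat R \oo eventually_filter f [set z : R | z <= a]
     (@closed_le _ a) (@nearW _ \oo _ _ ha) _ hf.
  by apply; apply: eventually_filter.
have hnn : forall y, 0 <= sigma y -> forall k, 0 <= topseq xi x sigma k y.
  move=> y hy; elim => [//|k IH]; rewrite topseqS.
  case: (eqVneq y (x k.+1)) => [e|ne].
    by rewrite e topple_self // -e (posp_id _ IH) subrr.
  exact: le_trans IH (topple_ge _ _ _ _ ne).
have hlim_ge0 : forall y, 0 <= sigma y -> 0 <= nu y.
  move=> y hy.
  have := @closed_cvg nat R \oo eventually_filter (fun k => topseq xi x sigma k y) [set z : R | 0 <= z]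
     (@closed_ge _ 0) (@nearW _ \oo _ _ (hnn y hy)) _ (hcvg y).
  by apply; apply: eventually_filter.
have hball : forall y, in_ball xi rad y -> nu y <= 0.
  move=> y hy; rewrite leNgt; apply/negP => hpos.
  have [M _ HM] := cvgr_gt _ (hcvg y) _ hpos.
  have [k [kM [k1 xk]]] := hcov2 y hy M.
  have := HM k kM; rewrite /=.
  case: k kM k1 xk => [//|k] kM _ xk.
  by rewrite topseqS -xk topple_self // ltNge sub_posp_le0.
have hzero : forall y, ~ in_ball xi rad y ->
    ~ (exists y', in_ball xi rad y' /\ adj y y') ->
    forall k, topseq xi x sigma k y = 0.
  move=> y nb nn; elim => [|k IH] /=.
    by case: (eqVneq (sigma y) 0) => // h; case: nb; apply: hsig.
  have hk := hcov1 k.+1 isT.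
  rewrite topple_far ?IH //.
  - by apply/eqP => e; apply: nb; rewrite e.
  - move=> i; apply/eqP => e; apply: nn; exists (x k.+1); split => //.
    exists i; right; apply/eqP; rewrite -(shift_eq _ _ _ 1); exact/eqP.
  - move=> i; apply/eqP => e; apply: nn; exists (x k.+1); split => //.
    exists i; left; apply/eqP; rewrite -[1]opprK -(shift_eq _ _ _ (-1)); exact/eqP.
have hnu0 : forall y, ~ in_ball xi rad y ->
    ~ (exists y', in_ball xi rad y' /\ adj y y') -> nu y = 0.
  move=> y nb nn.
  apply/le_anti/andP; split.
    by apply: (lim_le _ _ _ (hcvg y)) => k; rewrite hzero.
  by apply: (lim_ge _ _ _ (hcvg y)) => k; rewrite hzero.
have hsupp : forall y, y \notin S -> nu y = 0.
  move=> y yS; apply: hnu0.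
    move=> hb; move/negP: yS; apply; apply: inS => j; exact: leqW (hN _ hb j).
  move=> [y' [hb' [i [e|e]]]]; move/negP: yS; apply; apply: inS; rewrite e;
    apply: inbox_shift; [exact: hN | by left | exact: hN | by right].
exists nu, u; split; last split; last split; last split; last split; last split; last split.
- split.
    exists (\sum_(z <- S) `|nu z|) => y; case: (boolP (y \in S)) => yS.
      by apply: (le_sum_mem S (fun z => `|nu z|)) => // z.
    by rewrite hsupp // normr0 sumr_ge0.
  by exists S => y; exact: hsupp.
- move=> y; apply: (lim_ge _ _ _ (hcvgu y)) => k; exact: hod_ge0.
- exact: hcvg.
- move=> y; split; [exact: (hodmono y) | exact: hcvgu].
- move=> y /posp_gt0 hp.
  have nb : ~ in_ball xi rad y by move=> hb; have := hball y hb; lra.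
  split => //; case: (pselect (exists y', in_ball xi rad y' /\ adj y y')) => [//|nn].
  by have := hnu0 y nb nn; lra.
- move=> y /negp_lt0 hl; apply: negp_neq0; rewrite ltNge; apply/negP => h.
  by have := hlim_ge0 y h; lra.
- move=> y [nb _]; apply: hlim_ge0.
  by case: (eqVneq (sigma y) 0) => [->//|h]; case: nb; exact: hsig.
- exact: hball.
Qed.
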